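(* Let $Q\in V_{\alpha,\beta}$ be a quadric with $Q(v_0)=Q(v_1)$ whose $M_S$-translates span $V_{\alpha,\beta}$. Then for every $i=0,\dots,4$ (indices mod 5): $Q(v_i)=Q(v_0)$, $$B(v_{i+1},v_{i-1})=B(v_1,v_4)\prod_{j=1}^{i}\sigma^{j-1}\!\left(\frac{\beta^2}{\sigma(\beta)\sigma^4(\beta)}\right),\qquad B(v_{i+2},v_{i-2})=B(v_2,v_3)\prod_{j=1}^{i}\sigma^{j-1}\!\left(\frac{\beta^2}{\sigma^2(\beta)\sigma^3(\beta)}\right).$$
   Context: $K$ is a field with $\mathrm{char}(K)\neq5$ containing a primitive 5th root of unity $\zeta$; $E/K$ is an elliptic curve with full rational 5-torsion, basis $S,T$. $a\in K^*$ not a fifth power, $\alpha^5=a$, $L=K(\alpha)$, $\sigma(\alpha)=\zeta\alpha$, $\beta=\sum_{i=0}^4\beta_i\alpha^i\in L$ with $N_{L/K}(\beta)=b$. $M_S=M_{a,5}$ (with $(M_{a,5}x)_i=x_{i+1}$ for $i\le3$, $(M_{a,5}x)_4=ax_0$), $M_T=\mathrm{diag}(1,\zeta,\dots,\zeta^4)\sum_i\beta_iM_S^i$. $V_{\alpha,\beta}$ is the unique 5-dimensional $K$-space of quadrics in $x_0,\dots,x_4$ defining a smooth degree 5 genus one curve $C_{\alpha,\beta}\subset\mathbb P^4$ with Jacobian $E$, corresponding to $(a,b)\in H^1(K,E[5])$, on which $S,T$ act by $M_S,M_T$ (in particular $V_{\alpha,\beta}$ is stable under $Q\mapsto Q^{M_S}$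 and $Q\mapsto Q^{M_T}$, where $f^M(x)=f(Mx)$). $v_i=(1,\alpha\zeta^i,\alpha^2\zeta^{2i},\alpha^3\zeta^{3i},\alpha^4\zeta^{4i})$, and $B(w,v)=Q(w+v)-Q(w)-Q(v)$ is the associated bilinear form. *)

(* Defs.v *)
From HB Require Import structures.
From mathcomp Require Import all_boot all_order all_algebra.
From mathcomp Require Import mpoly.
Set Implicit Arguments. Unset Strict Implicit. Unset Printing Implicit Defensive.
Import GRing.Theory.
Local Open Scope ring_scope.

Section Defs.
Variables (K L : fieldType).

Definition is_quadric (Q : {mpoly K[5]}) : bool :=
  all (fun m => mdeg m == 2%N) (msupp Q).

Definition linsub (M : 'M[K]_5) : 5.-tuple {mpoly K[5]} :=
  [tuple \sum_(j < 5) M i j *: 'X_j | i < 5].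

Definition qtrans (Q : {mpoly K[5]}) (M : 'M[K]_5) : {mpoly K[5]} :=
  Q \mPo linsub M.

Definition qeval (iota : K -> L) (Q : {mpoly K[5]}) (x : 'I_5 -> L) : L :=
  mmap iota x Q.

Definition qbil (iota : K -> L) (Q : {mpoly K[5]}) (w v : 'I_5 -> L) : L :=
  qeval iota Q (fun k => w k + v k) - qeval iota Q w - qeval iota Q v.

(* M_{a,5}: (M x)_i = x_{i+1} for i <= 3, (M x)_4 = a x_0 *)
Definition Mmat (a : K) : 'M[K]_5 :=
  \matrix_(i < 5, j < 5)
    (if (i < 4)%N then (j == i.+1 :> nat)%:R else a * (j == 0%N :> nat)%:R).

Definition MTmat (a z : K) (bc : 'I_5 -> K) : 'M[K]_5 :=
  diag_mx (\row_(i < 5) z ^+ i) *m \sum_(i < 5) bc i *: Mmat a ^+ i.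

Definition ofcoords (iota : K -> L) (alpha : L) (c : 'I_5 -> K) : L :=
  \sum_(i < 5) iota (c i) * alpha ^+ i.

Definition vpt (iota : K -> L) (alpha : L) (z : K) (i : nat) : 'I_5 -> L :=
  fun k => (alpha * iota z ^+ i) ^+ k.

End Defs.

(* Main.v *)
Require Import Defs.
From HB Require Import structures.
From mathcomp Require Import all_boot all_order all_algebra.
From mathcomp Require Import mpoly.
From mathcomp Require Import ring.
From Stdlib Require Import FunctionalExtensionality.
Set Implicit Arguments. Unset Strict Implicit. Unset Printing Implicit Defensive.
Import GRing.Theory.
Local Open Scope ring_scope.

Lemma mono2 (L : comRingType) (m : 'X_{1..5}) : mdeg m = 2%N ->
  exists i j : 'I_5, forall h : 'I_5 -> L, mmap1 h m = h i * h j.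
Proof.
move=> hm.
case: (pickP (fun i : 'I_5 => m i != 0%N)) => [i hi|h0]; last first.
  have : mdeg m = 0%N by rewrite mdegE big1 // => i _; apply/eqP/negbFE/h0.
  by rewrite hm.
have le : (U_(i) <= m)%MM.
  apply/mnm_lepP => j; rewrite mnm1E; case: eqP => [<-|] //=; by rewrite lt0n.
have e := submK le.
have hd : mdeg (m - U_(i)) = 1%N.
  by move: hm; rewrite -{1}e mdegD mdeg1 addn1 => -[].
have [j /eqP hj] := mdeg1P _ (introT eqP hd).
exists j, i => h; rewrite -e hj commr_mmap1_M ?mmap1U //.
by move=> k x; apply: mulrC.
Qed.

Section Gen.
Variables (K L : fieldType) (iota : {rmorphism K -> L}).

Definition act (M : 'M[K]_5) (x : 'I_5 -> L) : 'I_5 -> L :=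
  fun k => \sum_(j < 5) iota (M k j) * x j.

Lemma qeval_sumZ n (c : 'I_n -> K) (P : 'I_n -> {mpoly K[5]}) x :
  qeval iota (\sum_(k < n) c k *: P k) x = \sum_(k < n) iota (c k) * qeval iota (P k) x.
Proof. rewrite /qeval raddf_sum; by apply: eq_bigr => k _; apply: mmapZ. Qed.

Lemma qeval_qtrans Q M x : qeval iota (qtrans Q M) x = qeval iota Q (act M x).
Proof.
rewrite /qeval /qtrans comp_mpolyEX raddf_sum /mmap /=.
apply: eq_bigr => m _.
rewrite (mmapZ x iota) ; congr (_ * _).
rewrite comp_mpolyX rmorph_prod /mmap1; apply: eq_bigr => i _.
rewrite rmorphXn; congr (_ ^+ _).
rewrite tnth_mktuple raddf_sum /act; apply: eq_bigr => j _.
transitivity (mmap iota x (M i j *: 'X_j)); first by [].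
by rewrite (mmapZ x iota) mmapX mmap1U.
Qed.
End Gen.

Section Gen2.
Variables (K L : fieldType) (iota : {rmorphism K -> L}).

Lemma polar Q (l u : L) w v : is_quadric Q ->
  qeval iota Q (fun k => l * w k + u * v k) =
  l ^+ 2 * qeval iota Q w + u ^+ 2 * qeval iota Q v + l * u * qbil iota Q w v.
Proof.
move=> /allP hQ.
rewrite /qbil /qeval /mmap -!sumrB !mulr_sumr -!big_split /=.
apply: eq_big_seq => m hm.
have [i [j hij]] := mono2 L (eqP (hQ m hm)).
rewrite !hij; ring.
Qed.

Lemma qhomog Q (l : L) w : is_quadric Q ->
  qeval iota Q (fun k => l * w k) = l ^+ 2 * qeval iota Q w.
Proof.
move=> hQ; have := polar l 0 w w hQ.
have -> : (fun k => l * w k + 0 * w k) = (fun k => l * w k).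
  by apply: functional_extensionality => k; rewrite mul0r addr0.
by move=> ->; rewrite expr0n /= mul0r mulr0 mul0r !addr0.
Qed.

Lemma qbil_scale Q (l u : L) w v : is_quadric Q ->
  qbil iota Q (fun k => l * w k) (fun k => u * v k) = l * u * qbil iota Q w v.
Proof.
move=> hQ; rewrite {1}/qbil polar // !qhomog //; ring.
Qed.

Lemma qbil_sumZ n (c : 'I_n -> K) (P : 'I_n -> {mpoly K[5]}) w v :
  qbil iota (\sum_(k < n) c k *: P k) w v = \sum_(k < n) iota (c k) * qbil iota (P k) w v.
Proof.
rewrite /qbil !qeval_sumZ -!sumrB; apply: eq_bigr => k _; ring.
Qed.

Lemma act_add M w v : act iota M (fun k => w k + v k) = (fun k => act iota M w k + act iota M v k).
Proof.
apply: functional_extensionality => k; rewrite /act -big_split /=.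
by apply: eq_bigr => j _; rewrite mulrDr.
Qed.

Lemma qbil_qtrans Q M w v :
  qbil iota (qtrans Q M) w v = qbil iota Q (act iota M w) (act iota M v).
Proof. by rewrite /qbil !qeval_qtrans act_add. Qed.

Lemma act_mul M N x : act iota (M *m N) x = act iota M (act iota N x).
Proof.
apply: functional_extensionality => k; rewrite /act.
under eq_bigr do rewrite mxE rmorph_sum mulr_suml.
rewrite exchange_big /=; apply: eq_bigr => l _.
rewrite mulr_sumr; apply: eq_bigr => j _.
by rewrite rmorphM mulrA.
Qed.

Lemma act_scale M (t : L) x : act iota M (fun k => t * x k) = (fun k => t * act iota M x k).
Proof.
apply: functional_extensionality => k; rewrite /act mulr_sumr.
by apply: eq_bigr => j _; rewrite mulrCA.
Qed.

Lemma act_sumZ n (c : 'I_n -> K) (M : 'I_n -> 'M[K]_5) x k :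
  act iota (\sum_(l < n) c l *: M l) x k = \sum_(l < n) iota (c l) * act iota (M l) x k.
Proof.
rewrite /act; under eq_bigr do rewrite summxE rmorph_sum mulr_suml.
rewrite exchange_big /=; apply: eq_bigr => l _.
rewrite mulr_sumr; apply: eq_bigr => j _.
by rewrite mxE rmorphM mulrA.
Qed.

Lemma act_diag (d : 'rV[K]_5) x k : act iota (diag_mx d) x k = iota (d 0 k) * x k.
Proof.
rewrite /act (bigD1 k) //= big1 ?addr0; first by rewrite mxE eqxx mulr1n.
by move=> j hj; rewrite mxE eq_sym (negbTE hj) mulr0n rmorph0 mul0r.
Qed.

Lemma act_one x k : act iota 1 x k = x k.
Proof.
rewrite /act (bigD1 k) //= big1 ?addr0; first by rewrite mxE eqxx rmorph1 mul1r.
by move=> j hj; rewrite mxE eq_sym (negbTE hj) rmorph0 mul0r.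
Qed.

Variable sigma : {rmorphism L -> L}.
Hypothesis hsigK : forall c : K, sigma (iota c) = iota c.

Lemma sig_qeval Q x : sigma (qeval iota Q x) = qeval iota Q (fun k => sigma (x k)).
Proof.
rewrite /qeval /mmap rmorph_sum; apply: eq_bigr => m _.
rewrite rmorphM hsigK rmorph_prod; congr (_ * _); apply: eq_bigr => i _.
by rewrite rmorphXn.
Qed.

Lemma sig_qbil Q w v : sigma (qbil iota Q w v) = qbil iota Q (fun k => sigma (w k)) (fun k => sigma (v k)).
Proof.
rewrite /qbil !rmorphB !sig_qeval; congr (qeval _ _ _ - _ - _).
by apply: functional_extensionality => k; rewrite rmorphD.
Qed.
End Gen2.

Unset Implicit Arguments. Set Strict Implicit. Set Printing Implicit Defensive.
Lemma iter_mul (L : fieldType) (sigma : {rmorphism L -> L}) (x g : L) :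
  sigma x = x * g -> forall i, iter i sigma x = x * \prod_(j < i) iter j sigma g.
Proof.
move=> hx; elim=> [|i IH]; first by rewrite big_ord0 mulr1.
rewrite iterS IH rmorphM rmorph_prod hx big_ord_recl -mulrA.
congr (_ * (_ * _)); apply: eq_bigr => j _; rewrite lift0 //.
Qed.

Theorem mainTheorem8
  (K L : fieldType) (iota : {rmorphism K -> L})
  (z : K) (hz : 5.-primitive_root z) (hchar : (5%:R : K) != 0)
  (a : K) (ha0 : a != 0) (ha : ~ (exists c : K, c ^+ 5 = a))
  (alpha : L) (halpha : alpha ^+ 5 = iota a)
  (hgen : forall x : L, exists c : 'I_5 -> K, x = ofcoords iota alpha c)
  (sigma : {rmorphism L -> L})
  (hsigK : forall c : K, sigma (iota c) = iota c)
  (hsiga : sigma alpha = iota z * alpha)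
  (bc : 'I_5 -> K) (b : K) (hb0 : b != 0)
  (hnorm : \prod_(j < 5) iter j sigma (ofcoords iota alpha bc) = iota b)
  (V : pred {mpoly K[5]})
  (hV0 : 0 \in V)
  (hVlin : forall (c : K) p q, p \in V -> q \in V -> c *: p + q \in V)
  (hVquad : forall p, p \in V -> is_quadric p)
  (hVdim : exists e : 'I_5 -> {mpoly K[5]},
      [/\ forall i, e i \in V,
          forall c : 'I_5 -> K, \sum_(i < 5) c i *: e i = 0 -> forall i, c i = 0
        & forall p, p \in V -> exists c : 'I_5 -> K, p = \sum_(i < 5) c i *: e i])
  (hVS : forall p, p \in V -> qtrans p (Mmat a) \in V)
  (hVT : forall p, p \in V -> qtrans p (MTmat a z bc) \in V)
  (hVnofix : forall (x : 'I_5 -> L) (lam : L), (exists k, x k != 0) ->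
      (forall k, \sum_(j < 5) iota (Mmat a k j) * x j = lam * x k) ->
      exists2 p, p \in V & qeval iota p x != 0)
  (Q : {mpoly K[5]}) (hQ : Q \in V)
  (hQ01 : qeval iota Q (vpt iota alpha z 0) = qeval iota Q (vpt iota alpha z 1))
  (hspan : forall p, p \in V -> exists (n : nat) (c : 'I_n -> K),
      p = \sum_(k < n) c k *: qtrans Q (Mmat a ^+ k)) :
  let beta := ofcoords iota alpha bc in
  let v := vpt iota alpha z in
  forall i : nat, (i < 5)%N ->
    [/\ qeval iota Q (v i) = qeval iota Q (v 0%N),
        qbil iota Q (v (i + 1)%N) (v (i + 4)%N)
          = qbil iota Q (v 1%N) (v 4%N)
            * \prod_(j < i) iter j sigma (beta ^+ 2 / (sigma beta * iter 4 sigma beta))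
      & qbil iota Q (v (i + 2)%N) (v (i + 3)%N)
          = qbil iota Q (v 2%N) (v 3%N)
            * \prod_(j < i) iter j sigma
                (beta ^+ 2 / (iter 2 sigma beta * iter 3 sigma beta))].
Proof.
move=> beta v.
have z5 : z ^+ 5 = 1 := prim_expr_order hz.
have iz5 : iota z ^+ 5 = 1 by rewrite -rmorphXn z5 rmorph1.
have vS n : v (n + 5)%N = v n.
  by apply: functional_extensionality => k; rewrite /v /vpt exprD iz5 mulr1.
have vsig n : (fun k => sigma (v n k)) = v n.+1.
  apply: functional_extensionality => k.
  by rewrite /v /vpt rmorphXn rmorphM hsiga rmorphXn hsigK exprS; congr (_ ^+ _); ring.
have qQ := hVquad Q hQ.
have hact n : act iota (Mmat a) (v n) = (fun k => (alpha * iota z ^+ n) * v n k).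
  apply: functional_extensionality => k; rewrite /act /v /vpt.
  case: k => [[|[|[|[|[|k]]]]] hk] //; rewrite !big_ord_recl big_ord0 !mxE /=.
  all: rewrite ?mulr0n ?mulr1n ?mulr1 ?mulr0 ?rmorph0 ?rmorph1 ?mul0r ?mul1r ?addr0 ?add0r.
  1-4: by rewrite /bump /=; ring.
  by rewrite -halpha -exprS exprMn -exprM mulnC exprM iz5 expr1n mulr1.
have hactk n l : act iota (Mmat a ^+ l) (v n) = (fun k => (alpha * iota z ^+ n) ^+ l * v n k).
  elim: l => [|l IH].
    by apply: functional_extensionality => k; rewrite expr0 act_one mul1r.
  rewrite exprS act_mul IH act_scale hact.
  by apply: functional_extensionality => k; rewrite exprS mulrCA mulrA.
have Hiter n c : iter n sigma (ofcoords iota alpha c) = ofcoords iota (alpha * iota z ^+ n) c.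
  elim: n => [|n IH]; first by rewrite expr0 mulr1.
  rewrite iterS IH /ofcoords rmorph_sum; apply: eq_bigr => l _.
  rewrite rmorphM hsigK rmorphXn rmorphM rmorphXn hsiga hsigK exprS; congr (_ * (_ ^+ _)); ring.
have hactT n : act iota (MTmat a z bc) (v n) = (fun k => iter n sigma beta * v n.+1 k).
  apply: functional_extensionality => k.
  rewrite /MTmat act_mul act_diag act_sumZ mxE rmorphXn Hiter /ofcoords mulr_suml mulr_sumr.
  apply: eq_bigr => l _; rewrite hactk /v /vpt exprS !exprMn; ring.
set e0 := qeval iota Q (v 0%N).
have se0 : sigma e0 = e0 by rewrite /e0 sig_qeval // vsig.
have hE n : qeval iota Q (v n) = e0.
  elim: n => [|n IH] //; by rewrite -vsig -sig_qeval // IH.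
have e0nz : e0 != 0.
  have h1 : exists k, v 0%N k != 0 by exists ord0; rewrite /v /vpt expr0 oner_neq0.
  have h2 : forall k, \sum_(j < 5) iota (Mmat a k j) * v 0%N j = alpha * v 0%N k.
    by move=> k; have := congr1 (fun f => f k) (hact 0%N); rewrite expr0 mulr1.
  have [p hp hp0] := hVnofix _ _ h1 h2.
  have [n [c hpc]] := hspan p hp.
  move: hp0; rewrite hpc qeval_sumZ; apply: contraNneq => he0.
  apply/eqP; apply: big1 => k _; rewrite qeval_qtrans hactk qhomog // -/e0 he0 !mulr0 //.
have [n [c hc]] := hspan _ (hVT Q hQ).
set P := \sum_(k < n) iota (c k) * ((alpha * iota z ^+ 0) ^+ k) ^+ 2.
have hP : beta ^+ 2 = P.
  have := congr1 (fun p => qeval iota p (v 0%N)) hc.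
  rewrite /= qeval_qtrans hactT qhomog // hE qeval_sumZ.
  under eq_bigr do rewrite qeval_qtrans hactk qhomog // hE mulrA.
  rewrite -mulr_suml => /mulIf; apply; exact: e0nz.
have hB (p q : nat) : (alpha * iota z ^+ p) * (alpha * iota z ^+ q) = (alpha * iota z ^+ 0) ^+ 2 ->
    iter p sigma beta * iter q sigma beta * qbil iota Q (v p.+1) (v q.+1) = beta ^+ 2 * qbil iota Q (v p) (v q).
  move=> hpq; have := congr1 (fun r => qbil iota r (v p) (v q)) hc.
  rewrite /= qbil_qtrans !hactT qbil_scale // qbil_sumZ => ->.
  rewrite hP /P mulr_suml; apply: eq_bigr => k _.
  by rewrite qbil_qtrans !hactk qbil_scale // -exprMn hpq exprAC mulrA.
have hprod : \prod_(j < 5) iter j sigma beta != 0 by rewrite hnorm fmorph_eq0.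
have hnz j : (j < 5)%N -> iter j sigma beta != 0.
  by move=> hj; move/prodf_neq0: hprod => /(_ (Ordinal hj) isT).
have h5 p q : (p + q = 5)%N -> (alpha * iota z ^+ p) * (alpha * iota z ^+ q) = (alpha * iota z ^+ 0) ^+ 2.
  by move=> h; rewrite mulrACA -exprD h iz5 expr0 !mulr1.
have v5 : v 5%N = v 0%N := vS 0%N.
have eq1 := hB 1%N 4%N (h5 1%N 4%N erefl).
have eq2 := hB 2%N 3%N (h5 2%N 3%N erefl).
rewrite v5 in eq1.
have s1 : sigma (qbil iota Q (v 1%N) (v 4%N)) = qbil iota Q (v 1%N) (v 4%N) * (beta ^+ 2 / (sigma beta * iter 4 sigma beta)).
  rewrite sig_qbil // !vsig v5 mulrA [_ * beta ^+ 2]mulrC -eq1.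
  have := hnz 1%N erefl; have := hnz 4%N erefl => /= n4 n1.
  field; by rewrite n1 n4.
have s2 : sigma (qbil iota Q (v 2%N) (v 3%N)) = qbil iota Q (v 2%N) (v 3%N) * (beta ^+ 2 / (iter 2 sigma beta * iter 3 sigma beta)).
  rewrite sig_qbil // !vsig mulrA [_ * beta ^+ 2]mulrC -eq2.
  have := hnz 2%N erefl; have := hnz 3%N erefl => n3 n2.
  field; by rewrite n2 n3.
have r1 i : qbil iota Q (v (i + 1)%N) (v (i + 4)%N) = iter i sigma (qbil iota Q (v 1%N) (v 4%N)).
  elim: i => [|i IH] //; by rewrite iterS -IH sig_qbil // !vsig !addSn.
have r2 i : qbil iota Q (v (i + 2)%N) (v (i + 3)%N) = iter i sigma (qbil iota Q (v 2%N) (v 3%N)).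
  elim: i => [|i IH] //; by rewrite iterS -IH sig_qbil // !vsig !addSn.
move=> i _; split; first by rewrite hE.
- by rewrite r1; apply: iter_mul.
- by rewrite r2; apply: iter_mul.
Qed.
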